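(* Let $R,S$ be (possibly empty) chains and let $T$ be the chain $T=[R^*\,1\,1\,2\,2\,S]$ (concatenation). If $\mathcal{Z}(T)>\tfrac13$, then $\rho_S>\rho_R$ (i.e. $[S]<[R]$ in the paper's ordering).
   Context: A chain is a finite sequence $T=[a_1a_2\dots a_n]$ of positive integers. For a chain $S=[s_1\dots s_m]$ write $\rho_S=[0;s_1,\dots,s_m]$, with $\rho_\emptyset=0$ for the empty chain, and $[s_1;s_2,\dots,s_m]$ for the finite continued fraction, which equals $1/\rho_S$. The reverse of $R=[r_1\dots r_k]$ is $R^*=[r_k\dots r_1]$. Define $\mathcal{Z}(T)=\big(\max_{1\le i\le n}([a_i;a_{i+1},\dots,a_n]+[0;a_{i-1},\dots,a_1])\big)^{-1}$, where for $i=1$ the second summand is $0$. The paper orders chains by $[T_1]<[T_2]\iff\rho_{T_1}>\rho_{T_2}$. *)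

(* Defs.v *)
From mathcomp Require Import all_boot all_order all_algebra.
Set Implicit Arguments. Unset Strict Implicit. Unset Printing Implicit Defensive.
Import Order.TTheory GRing.Theory Num.Theory.
Local Open Scope ring_scope.

(* A chain is a seq nat; positivity of its entries is stated separately. *)
Definition chain_pos (s : seq nat) : bool := all (fun a => 0 < a)%N s.

(* rho_S = [0; s_1, ..., s_m], with rho_[::] = 0. *)
Definition rho (s : seq nat) : rat :=
  foldr (fun (a : nat) (x : rat) => (a%:R + x)^-1) 0 s.

Definition cfi (a : nat) (s : seq nat) : rat := a%:R + rho s.

(* Term at (0-based) position i of T:
   [a_i; a_{i+1},...,a_n] + [0; a_{i-1},...,a_1]. *)
Definition Zterm (T : seq nat) (i : nat) : rat :=
  cfi (nth 0%N T i) (drop i.+1 T) + rho (rev (take i T)).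

(* Z(T) = (max_i Zterm T i)^-1 (all terms are positive for a nonempty
   chain, so taking the max with initial value 0 is harmless). *)
Definition Zc (T : seq nat) : rat :=
  (\big[Num.max/0]_(i < size T) Zterm T i)^-1.

(* Main.v *)
Require Import Defs.
From mathcomp Require Import all_boot all_order all_algebra.
From mathcomp Require Import zify ring lra.
Import Order.TTheory GRing.Theory Num.Theory.
Local Open Scope ring_scope.

Lemma aux_lt (a b : rat) : 2%:R + a + (1 - b) < 3%:R -> a < b.
Proof. move=> H. lra. Qed.

Lemma rho_ge0 s : 0 <= rho s.
Proof. elim: s => [|a s IH] //=; rewrite invr_ge0 addr_ge0 //. Qed.

Lemma bigmax_ge_seq (I : eqType) (s : seq I) (F : I -> rat) (i : I) :
  i \in s -> F i <= \big[Num.max/0]_(j <- s) F j.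
Proof.
elim: s => [|a s IH] //; rewrite inE big_cons le_max => /orP [/eqP ->|/IH ->];
  by rewrite ?lexx ?orbT.
Qed.

Lemma bigmax_ge (n : nat) (F : 'I_n -> rat) (i : 'I_n) :
  F i <= \big[Num.max/0]_(j < n) F j.
Proof. by apply: bigmax_ge_seq; rewrite mem_index_enum. Qed.

Theorem lemma3p4 (R S : seq nat) :
  chain_pos R -> chain_pos S ->
  Zc (rev R ++ [:: 1%N; 1%N; 2%N; 2%N] ++ S) > 1 / 3%:R ->
  rho S > rho R.
Proof.
move=> _ _; set T := (rev R ++ _).
have hi : (size R + 2 < size T)%N by rewrite /T size_cat size_rev /=; lia.
have Hle := @bigmax_ge (size T) (fun j => Zterm T j) (Ordinal hi).
rewrite /Zc; set M := \big[_/_]_(_ < _) _ in Hle *.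
move=> HZ.
have Mpos : 0 < M.
  rewrite lt_neqAle; apply/andP; split.
    by apply/eqP=> h; move: HZ; rewrite -h invr0 ltNge divr_ge0.
  by apply: le_trans Hle; rewrite /Zterm /cfi addr_ge0 ?rho_ge0 // addr_ge0 ?rho_ge0.
have M3 : M < 3%:R.
  by move: HZ; rewrite mul1r ltf_pV2 ?posrE // ltr0n.
have Hz : Zterm T (size R + 2) < 3%:R by apply: le_lt_trans Hle M3.
move: Hz; rewrite /Zterm /T.
rewrite nth_cat size_rev ltnNge leq_addr /= addKn /=.
have -> : (size R + 2).+1 = (size (rev R) + 3)%N by rewrite size_rev; lia.
rewrite drop_cat ltnNge leq_addr /= addKn /=.
rewrite take_cat size_rev ltnNge leq_addr /= addKn /= rev_cat /= revK.
rewrite /cfi /=.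
have x0 := rho_ge0 S; have y0 := rho_ge0 R.
move: x0 y0; set x := rho S; set y := rho R => x0 y0 H.
have hc : (1 + (1 + y)^-1)^-1 = 1 - (2 + y)^-1.
  have h1 : 1 + y != 0 by rewrite gt_eqF // ltr_pwDl.
  have h2 : 2 + y != 0 by rewrite gt_eqF // ltr_pwDl.
  have h3 : 1 + (1 + y)^-1 != 0 by rewrite gt_eqF // ltr_pwDl // invr_ge0 addr_ge0.
  have h4 : (2 + y) = (1 + y) * (1 + (1 + y)^-1) by rewrite mulrDr mulr1 mulfV //; ring.
  rewrite h4; field.
by rewrite h1 /= gt_eqF //; lra.
rewrite hc in H.
have : (2 + x)^-1 < (2 + y)^-1.
  move: H; move: (2 + x)^-1 (2 + y)^-1 => a b; exact: aux_lt.
have p1 : 0 < 2 + x by lra.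
have p2 : 0 < 2 + y by lra.
by rewrite ltf_pV2 ?posrE // ltrD2l.
Qed.
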